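(* Let $\mathbb{P}_w$ be a distribution on $\mathbb{R}$ that is symmetric around zero, let $\boldsymbol{U}\in\mathbb{R}^{n\times n}$ be positive semi-definite, and let $\boldsymbol{w}=(w_1,\ldots,w_n)^\top$ have i.i.d. entries from $\mathbb{P}_w$. Then for any $\delta>0$, $$\mathbb{P}\bigl(\boldsymbol{w}^\top\boldsymbol{U}\boldsymbol{w}>\delta\|\boldsymbol{w}\|_2^2\bigr)\le\frac{\mathrm{tr}[\boldsymbol{U}]}{\delta n}.$$ *)

(* Defs.v *)
From HB Require Import structures.
From mathcomp Require Import all_boot all_order all_algebra.
From mathcomp Require Import all_classical all_reals all_analysis.
Set Implicit Arguments. Unset Strict Implicit. Unset Printing Implicit Defensive.
Import Order.TTheory GRing.Theory Num.Theory.
Local Open Scope classical_set_scope.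
Local Open Scope ring_scope.

Definition psd (R : realType) (n : nat) (U : 'M[R]_n) : Prop :=
  U^T = U /\ forall x : 'cV[R]_n, 0 <= (x^T *m U *m x) 0 0.

Definition symmetric_distr (R : realType) (Pw : probability R R) : Prop :=
  forall A : set R, measurable A -> Pw A = Pw [set - x | x in A].

(* Mutual independence of the random variables w_0,...,w_{n-1}: product rule
   for preimages of Borel sets (taking A i = setT gives every subfamily). *)
Definition mutually_independent d (T : measurableType d) (R : realType)
  (P : probability T R) (n : nat) (w : 'I_n -> T -> R) : Prop :=
  forall A : 'I_n -> set R, (forall i, measurable (A i)) ->
    P (\bigcap_(i in [set: 'I_n]) (w i @^-1` A i)) =
    (\prod_(i < n) P (w i @^-1` A i))%E.

Definition has_law d (T : measurableType d) (R : realType)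
  (P : probability T R) (X : T -> R) (Pw : probability R R) : Prop :=
  forall A : set R, measurable A -> P (X @^-1` A) = Pw A.

Definition rvec d (T : measurableType d) (R : realType) (n : nat)
  (w : 'I_n -> T -> R) (t : T) : 'cV[R]_n := \col_i w i t.

(* Main.v *)
Require Import Defs.
From HB Require Import structures.
From mathcomp Require Import all_boot all_order all_algebra.
From mathcomp Require Import all_classical all_reals all_analysis.
From mathcomp Require Import fingroup perm measurable_realfun ring lra.
Import Order.TTheory GRing.Theory Num.Theory.
Local Open Scope classical_set_scope.
Local Open Scope ring_scope.
Set Implicit Arguments. Unset Strict Implicit. Unset Printing Implicit Defensive.
Definition VR (R : realType) (n : nat) := 'I_n -> R.
HB.instance Definition _ R n := gen_eqMixin (VR R n).
HB.instance Definition _ R n := gen_choiceMixin (VR R n).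
HB.instance Definition _ (R : realType) n := isPointed.Build (VR R n) (fun _ => 0).

Definition rect (R : realType) n (A : 'I_n -> set R) : set (VR R n) :=
  [set v | forall i, A i (v i)].
Definition Grect (R : realType) n : set (set (VR R n)) :=
  [set B | exists A : 'I_n -> set R, (forall i, measurable (A i)) /\ B = rect A].
Notation WR R n := (g_sigma_algebraType (@Grect R n)).

Section helpers.
Context (R : realType) (n : nat).

Lemma coord_meas (i : 'I_n) : measurable_fun setT (fun v : WR R n => v i).
Proof.
move=> _ B mB; rewrite setTI; apply: sub_sigma_algebra.
exists (fun k => if k == i then B else setT); split.
  by move=> k; case: ifP.
apply/seteqP; split => v /=.
  by move=> Bv k; case: ifPn => // /eqP ->.
by move=> /(_ i); rewrite eqxx.
Qed.

Context d (T : measurableType d).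

Definition vec (z : 'I_n -> T -> R) : T -> WR R n := fun t i => z i t.

Lemma vec_preimage z (A : 'I_n -> set R) : vec z @^-1` rect A = [set t : T | forall i, A i (z i t)].
Proof. by []. Qed.

Lemma rect_bigcap z (A : 'I_n -> set R) :
  [set t : T | forall i, A i (z i t)] = \bigcap_(i in [set: 'I_n]) (z i @^-1` A i).
Proof. by apply/seteqP; split => [t H i _|t H i]; apply: H. Qed.

Lemma rect_meas z (A : 'I_n -> set R) : (forall i, measurable_fun setT (z i)) ->
  (forall i, measurable (A i)) -> measurable [set t : T | forall i, A i (z i t)].
Proof.
move=> mz mA; rewrite rect_bigcap; apply: fin_bigcap_measurable; first exact: finite_finset.
by move=> i _; rewrite -[X in measurable X]setTI; apply: mz.
Qed.

Lemma vec_meas z : (forall i, measurable_fun setT (z i)) ->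
  measurable_fun setT (vec z).
Proof.
move=> mz; apply: (@measurability _ _ _ _ setT (vec z) (@Grect R n)) => //.
move=> _ [B [A [mA ->]] <-]; rewrite setTI vec_preimage.
exact: rect_meas.
Qed.

Lemma bdd_int (P : probability T R) (f : T -> R) :
  measurable_fun setT f -> (exists M, forall t, `|f t| <= M) ->
  P.-integrable setT (fun t => (f t)%:E).
Proof.
move=> mf [M HM]; apply: (measurable_bounded_integrable (f := f)) => //.
  by rewrite (le_lt_trans (probability_le1 _ _)) ?ltry.
exists M; split; first exact: num_real.
by move=> x Mx t _; rewrite /= (le_trans (HM t)) // ltW.
Qed.

Lemma law_eq (P : probability T R) (z z' : 'I_n -> T -> R) :
  (forall i, measurable_fun setT (z i)) -> (forall i, measurable_fun setT (z' i)) ->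
  (forall A : 'I_n -> set R, (forall i, measurable (A i)) ->
     P [set t : T | forall i, A i (z i t)] = P [set t : T | forall i, A i (z' i t)]) ->
  forall g : WR R n -> R, measurable_fun setT g -> (exists M, forall v, `|g v| <= M) ->
  (\int[P]_(t in setT) (g (vec z t))%:E = \int[P]_(t in setT) (g (vec z' t))%:E)%E.
Proof.
move=> mz mz' Hr g mg [M HM].
have mZ := vec_meas mz; have mZ' := vec_meas mz'.
pose m1 := measure_function_pushforward__canonical__measure_function_Measure P mZ.
pose m2 := measure_function_pushforward__canonical__measure_function_Measure P mZ'.
have meq : forall B, measurable B -> m1 B = m2 B.
  move=> B mB.
  apply: (@g_sigma_algebra_measure_unique _ R (WR R n) (@Grect R n) _ (fun _ => setT) _ _ m1 m2 _ _ _ B mB).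
  - by move=> A GA; apply: sub_sigma_algebra.
  - move=> _; exists (fun _ => setT); split => //.
    by apply/seteqP; split => v //.
  - by rewrite bigcup_const.
  - move=> _ _ [A [mA ->]] [A' [mA' ->]]; exists (fun i => A i `&` A' i); split.
      by move=> i; apply: measurableI.
    by apply/seteqP; split => v /=; [move=> [H1 H2] i; split|move=> H; split => i; case: (H i)].
  - move=> _ [A [mA ->]]; rewrite /m1 /m2 /= /pushforward !vec_preimage.
    exact: Hr.
  - by move=> _; rewrite /m1 /= /pushforward preimage_setT (le_lt_trans (probability_le1 _ _)) ?ltry.
have mgE : measurable_fun (T := WR R n) (U := \bar R) setT (EFin \o g) by apply/measurable_EFinP.
have ig : forall (Z : T -> WR R n), measurable_fun setT Z ->
    P.-integrable (Z @^-1` setT) ((EFin \o g) \o Z).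
  move=> Z mZZ; rewrite preimage_setT; apply: bdd_int.
    exact: measurableT_comp.
  by exists M => t; apply: HM.
transitivity (\int[m1]_(y in setT) (g y)%:E)%E.
  by rewrite (integral_pushforward mZ mgE (ig _ mZ)) // preimage_setT.
transitivity (\int[m2]_(y in setT) (g y)%:E)%E.
  by apply: eq_measure_integral => A mA _; rewrite meq.
by rewrite (integral_pushforward mZ' mgE (ig _ mZ')) // preimage_setT.
Qed.

Lemma rect_law (P : probability T R) (Pw : probability R R) (w : 'I_n -> T -> R)
  (e : 'I_n -> R) (p : {perm 'I_n}) :
  symmetric_distr Pw -> (forall i, measurable_fun setT (w i)) ->
  (forall i, has_law P (w i) Pw) -> mutually_independent P w ->
  (forall i, e i = 1 \/ e i = -1) ->
  forall A : 'I_n -> set R, (forall i, measurable (A i)) ->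
  P [set t : T | forall i, A i (w i t)] = P [set t : T | forall i, A i (e i * w (p i) t)].
Proof.
move=> sym mw law ind he A mA.
have key : forall B : 'I_n -> set R, (forall i, measurable (B i)) ->
    P [set t : T | forall i, B i (w i t)] = (\prod_(i < n) Pw (B i))%E.
  by move=> B mB; rewrite rect_bigcap ind //; apply: eq_bigr => i _; apply: law.
have mC : forall (c : R) (A0 : set R), measurable A0 -> measurable [set x | A0 (c * x)].
  move=> c A0 mA0; rewrite -[X in measurable X]setTI.
  exact: (mulrl_measurable (D := setT) c measurableT mA0).
have symE : forall (c : R) (A0 : set R), c = 1 \/ c = -1 -> measurable A0 ->
    Pw [set x | A0 (c * x)] = Pw A0.
  move=> c A0 [->|->] mA0.
    by congr (Pw _); apply/seteqP; split => x /=; rewrite mul1r.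
  rewrite (sym A0 mA0); congr (Pw _); apply/seteqP; split => x /=.
    by rewrite mulN1r => Ax; exists (- x) => //; rewrite opprK.
  by move=> [y Ay <-]; rewrite mulN1r opprK.
have -> : [set t : T | forall i, A i (e i * w (p i) t)] =
    [set t : T | forall j, [set x | A ((p^-1)%g j) (e ((p^-1)%g j) * x)] (w j t)].
  apply/seteqP; split => t /= H.
    by move=> j; have := H ((p^-1)%g j); rewrite permKV.
  by move=> i; have := H (p i); rewrite permK.
rewrite (key A mA) (key _ (fun j => mC _ _ (mA _))).
rewrite (reindex_inj (@perm_inj _ (p^-1)%g)) /=.
by apply: eq_bigr => j _; rewrite symE.
Qed.

Lemma inv_meas : measurable_fun [set: R] GRing.inv.
Proof.
rewrite -(setvU [set (0:R)]).
apply/measurable_funU; [exact: measurableC|by []|split].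
  apply: open_continuous_measurable_fun.
    by apply: closed_openC; apply: accessible_closed_set1; apply: hausdorff_accessible; apply: Rhausdorff.
  move=> x /set_mem /= x0; apply: inv_continuous; exact/eqP.
exact: measurable_fun_set1.
Qed.
End helpers.

Lemma quadE (R : realType) n (U : 'M[R]_n) (x : 'cV[R]_n) :
  (x^T *m U *m x) 0 0 = \sum_i \sum_j U i j * (x i 0 * x j 0).
Proof.
rewrite mxE; under eq_bigr => j _ do rewrite mxE big_distrl.
rewrite exchange_big; apply: eq_bigr => i _; apply: eq_bigr => j _.
by rewrite !mxE /= mulrCA mulrA.
Qed.

Lemma diag_ge0 (R : realType) n (U : 'M[R]_n) : psd U -> forall i, 0 <= U i i.
Proof.
move=> [_ H] i; have := H (delta_mx i 0); rewrite quadE.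
under eq_bigr => k _ do under eq_bigr => j _ do rewrite !mxE !andbT.
rewrite (bigD1 i) //= [X in _ + X]big1 => [|k /negbTE ->]; last first.
  by apply: big1 => j _; rewrite mul0r mulr0.
rewrite addr0 (bigD1 i) //= [X in _ + X]big1 => [|j /negbTE ->]; last first.
  by rewrite mulr0 mulr0.
by rewrite addr0 eqxx mulr1 mulr1.
Qed.


Unset Implicit Arguments. Set Strict Implicit.

Theorem lemma4 (R : realType) (d : measure_display) (T : measurableType d)
  (P : probability T R) (Pw : probability R R) (n : nat) (U : 'M[R]_n)
  (w : 'I_n -> T -> R) (delta : R) :
  (0 < n)%N ->
  symmetric_distr Pw ->
  psd U ->
  (forall i, measurable_fun setT (w i)) ->
  (forall i, has_law P (w i) Pw) ->
  mutually_independent P w ->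
  0 < delta ->
  (P [set t | (delta * (\sum_(i < n) w i t ^+ 2) <
              ((rvec w t)^T *m U *m rvec w t) 0 0)%R]
     <= (\tr U / (delta * n%:R))%:E)%E.
Proof.
move=> n0 sym psdU mw law ind dpos.
pose k0 : 'I_n := Ordinal n0.
pose Y : T -> WR R n := vec w.
have mY : measurable_fun setT Y := vec_meas mw.
pose sV (v : WR R n) := \sum_i v i ^+ 2.
pose hh (i j : 'I_n) (v : WR R n) := v i * v j / sV v.
have msV : measurable_fun setT sV.
  by apply: measurable_sum => i; apply: measurable_funX; exact: coord_meas.
have mh : forall i j, measurable_fun setT (hh i j).
  move=> i j; apply: measurable_funM; first by apply: measurable_funM; apply: coord_meas.
  exact: measurableT_comp (@inv_meas R) msV.
have sV_ge0 : forall v, 0 <= sV v by move=> v; apply: sumr_ge0 => l _; exact: sqr_ge0.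
have sV_ge : forall v k, v k ^+ 2 <= sV v.
  move=> v k; rewrite /sV (bigD1 k) //= lerDl; apply: sumr_ge0 => l _; exact: sqr_ge0.
have bh : forall i j v, `|hh i j v| <= 2.
  move=> i j v; rewrite /hh normrM normfV.
  have [s0|s0] := eqVneq (sV v) 0; first by rewrite s0 normr0 invr0 mulr0.
  have sp : 0 < sV v by rewrite lt_def s0 sV_ge0.
  rewrite (ger0_norm (sV_ge0 v)) ler_pdivrMr // normrM.
  have := sV_ge v i; have := sV_ge v j.
  rewrite -[v i ^+ 2](real_normK (num_real _)) -[v j ^+ 2](real_normK (num_real _)).
  have := normr_ge0 (v i); have := normr_ge0 (v j).
  set a := `|v i|; set b := `|v j|; set s := sV v; nra.
have sV_perm : forall (e : 'I_n -> R) (p : {perm 'I_n}) t,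
    (forall k, e k = 1 \/ e k = -1) ->
    sV (vec (fun k t => e k * w (p k) t) t) = sV (Y t).
  move=> e p t he.
  have e2 : forall k, e k ^+ 2 = 1 by move=> k; case: (he k) => ->; rewrite ?sqrrN expr1n.
  rewrite /sV /Y /vec; under eq_bigr => k _ do rewrite exprMn e2 mul1r.
  by rewrite [RHS](reindex_inj (@perm_inj _ p)).
pose I i j := (\int[P]_(t in setT) (hh i j (Y t))%:E)%E.
have mhY : forall i j, measurable_fun setT (fun t => hh i j (Y t)).
  by move=> i j; exact: measurableT_comp (mh i j) mY.
have ih : forall i j, P.-integrable setT (fun t => (hh i j (Y t))%:E).
  by move=> i j; apply: bdd_int => //; exists 2 => t; exact: bh.
have Ifin : forall i j, I i j = (fine (I i j))%:E.
  by move=> i j; rewrite fineK // (integrable_fin_num measurableT (ih i j)).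
have mz' : forall (e : 'I_n -> R) (p : {perm 'I_n}) k,
    measurable_fun setT (fun t => e k * w (p k) t).
  by move=> e p k; apply: measurable_funM => //; exact: mw.
have LE : forall (e : 'I_n -> R) (p : {perm 'I_n}), (forall k, e k = 1 \/ e k = -1) ->
    forall g : WR R n -> R, measurable_fun setT g -> (exists M, forall v, `|g v| <= M) ->
    (\int[P]_(t in setT) (g (Y t))%:E =
     \int[P]_(t in setT) (g (vec (fun k t => e k * w (p k) t) t))%:E)%E.
  move=> e p he g mg bg; apply: (@law_eq R n d T P w _ mw (mz' e p)) => // A mA.
  exact: (@rect_law R n d T P Pw w e p sym mw law ind he A mA).
have Ioff : forall i j, i != j -> I i j = 0%E.
  move=> i j ij.
  pose e k : R := if k == i then -1 else 1.
  have he : forall k, e k = 1 \/ e k = -1.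
    by move=> k; rewrite /e; case: ifP => _; [right|left].
  have pt : forall t, hh i j (vec (fun k t => e k * w ((1%g : {perm 'I_n}) k) t) t)
      = -1 * hh i j (Y t).
    move=> t; rewrite /hh sV_perm //; rewrite {1 2}/vec /e eqxx eq_sym (negbTE ij) !perm1.
    by rewrite /Y /vec; ring.
  have : I i j = (\int[P]_(t in setT) ((-1)%:E * (hh i j (Y t))%:E))%E.
    rewrite /I (LE e 1%g he (hh i j) (mh i j) (ex_intro _ 2 (bh i j))).
    by apply: eq_integral => t _; rewrite pt EFinM.
  rewrite integralZl // -/(I i j) => h.
  have h2 : fine (I i j) = -1 * fine (I i j).
    by apply: EFin_inj; rewrite EFinM -Ifin.
  by rewrite Ifin (_ : fine (I i j) = 0) //; lra.
have Idiag : forall i, I i i = I k0 k0.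
  move=> i; pose p := tperm i k0.
  have he : forall k : 'I_n, (1:R) = 1 \/ (1:R) = -1 by move=> k; left.
  rewrite /I (LE (fun=> 1 : R) p he (hh i i) (mh i i) (ex_intro _ 2 (bh i i))).
  apply: eq_integral => t _; rewrite /hh sV_perm //; rewrite {1 2}/vec /p tpermL.
  by rewrite !mul1r.
pose c := fine (I k0 k0).
have Ic : forall i, I i i = c%:E by move=> i; rewrite Idiag Ifin.
have hii0 : forall i v, 0 <= hh i i v.
  by move=> i v; rewrite /hh -expr2; apply: divr_ge0; [exact: sqr_ge0|exact: sV_ge0].
have c0 : 0 <= c.
  have : (0 <= I k0 k0)%E.
    by apply: integral_ge0 => t _; rewrite lee_fin.
  by rewrite Ifin lee_fin.
have hsum : forall v, \sum_i hh i i v <= 1.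
  move=> v; rewrite /hh; under eq_bigr => i _ do rewrite -expr2.
  rewrite -mulr_suml -/(sV v).
  have [s0|s0] := eqVneq (sV v) 0; first by rewrite s0 mul0r.
  by rewrite divff.
have nc : n%:R * c <= 1.
  have H : (\sum_i I i i <= 1)%E.
    rewrite /I -integral_sum //.
    under eq_integral do rewrite sumEFin.
    apply: (@le_trans _ _ (\int[P]_(t in setT) (cst 1%E t))%E); last first.
      by rewrite integral_cst // mul1e probability_le1.
    apply: ge0_le_integral => //.
    - by move=> t _; rewrite lee_fin; apply: sumr_ge0 => i _.
    - by apply/measurable_EFinP; apply: measurable_sum => i; exact: mhY.
    - by move=> t _; rewrite lee_fin.
  move: H; under eq_bigr do rewrite Ic.
  by rewrite sumEFin sumr_const card_ord mulr_natl lee_fin.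
pose QV (v : WR R n) := \sum_i \sum_j U i j * (v i * v j).
have Qt : forall t, ((rvec w t)^T *m U *m rvec w t) 0 0 = QV (Y t).
  by move=> t; rewrite quadE; apply: eq_bigr => i _; apply: eq_bigr => j _; rewrite !mxE.
have QV_ge0 : forall t, 0 <= QV (Y t) by move=> t; rewrite -Qt; exact: psdU.2.
have mQV : measurable_fun setT QV.
  apply: measurable_sum => i; apply: measurable_sum => j.
  by apply: measurable_funM => //; apply: measurable_funM; exact: coord_meas.
pose E := [set t | delta * sV (Y t) < QV (Y t)].
have -> : P [set t | (delta * (\sum_(i < n) w i t ^+ 2) <
              ((rvec w t)^T *m U *m rvec w t) 0 0)%R] = P E.
  by congr (P _); apply/seteqP; split => t /=; rewrite Qt.
have mE : measurable E.
  have mf : measurable_fun setT (fun t => QV (Y t) - delta * sV (Y t)).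
    apply: measurable_funB; first exact: measurableT_comp mQV mY.
    by apply: measurable_funM => //; exact: measurableT_comp msV mY.
  have := mf measurableT `]0, +oo[%classic (measurable_itv _).
  rewrite setTI; congr measurable; apply/seteqP; split => t /=;
    by rewrite in_itv /= andbT subr_gt0.
have Q0 : forall v, sV v = 0 -> QV v = 0.
  move=> v /eqP; rewrite psumr_eq0 => [/allP H|i _]; last exact: sqr_ge0.
  have v0 : forall i, v i = 0.
    by move=> i; apply/eqP; rewrite -sqrf_eq0; apply: H; rewrite mem_index_enum.
  by rewrite /QV big1 // => i _; rewrite big1 // => j _; rewrite !v0 mul0r mulr0.
have mk : (delta%:E * P E <= \int[P]_(t in setT) (QV (Y t) / sV (Y t))%:E)%E.
  rewrite -(setIT E) -integral_indic // -ge0_integralZl_EFin //;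
    [|by apply/measurable_EFinP; exact: measurable_indic|exact: ltW].
  under eq_integral do rewrite -EFinM.
  apply: ge0_le_integral => //.
  - by move=> t _; rewrite lee_fin indicE mulr_ge0 // ltW.
  - by apply/measurable_EFinP; apply: measurable_funM => //; exact: measurable_indic.
  - apply/measurable_EFinP; apply: measurable_funM; first exact: measurableT_comp mQV mY.
    exact: measurableT_comp (@inv_meas R) (measurableT_comp msV mY).
  move=> t _; rewrite lee_fin indicE.
  case: (boolP (t \in E)) => [/set_mem tE|_]; last by rewrite mulr0; apply: divr_ge0.
  rewrite mulr1.
  have [s0|s0] := eqVneq (sV (Y t)) 0.
    by move: tE; rewrite /E /= s0 Q0 // mulr0 ltxx.
  have sp : 0 < sV (Y t) by rewrite lt_def s0 sV_ge0.
  by rewrite ler_pdivlMr // ltW.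
have intUh : forall i j, P.-integrable setT (fun t => (U i j * hh i j (Y t))%:E).
  move=> i j; apply: bdd_int; first by apply: measurable_funM => //; exact: mhY.
  by exists (`|U i j| * 2) => t; rewrite normrM ler_wpM2l.
have intX : (\int[P]_(t in setT) (QV (Y t) / sV (Y t))%:E =
    \sum_i \sum_j (U i j)%:E * I i j)%E.
  have pw : forall t, (QV (Y t) / sV (Y t))%:E =
      (\sum_i \sum_j (U i j * hh i j (Y t))%:E)%E.
    move=> t; under eq_bigr do rewrite sumEFin; rewrite sumEFin; congr EFin.
    rewrite /QV mulr_suml; apply: eq_bigr => i _; rewrite mulr_suml.
    by apply: eq_bigr => j _; rewrite /hh [RHS]mulrA.
  under eq_integral do rewrite pw.
  rewrite integral_sum //; last first.
    by move=> i; apply: integrable_sum => // j _; exact: intUh.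
  apply: eq_bigr => i _; rewrite integral_sum //.
  apply: eq_bigr => j _; under eq_integral do rewrite EFinM.
  by rewrite integralZl.
have sumI : (\sum_i \sum_j (U i j)%:E * I i j = ((\tr U) * c)%:E)%E.
  rewrite /mxtrace mulr_suml -sumEFin; apply: eq_bigr => i _.
  rewrite (bigD1 i) //= big1 ?adde0 => [|j ji]; last by rewrite Ioff ?mule0 // eq_sym.
  by rewrite Ic EFinM.
rewrite intX sumI in mk.
have trge0 : 0 <= \tr U by apply: sumr_ge0 => i _; exact: diag_ge0.
move: mk; rewrite -(fineK (fin_num_measure P E mE)) -EFinM !lee_fin.
set pe := fine (P E) => mk.
have n0' : 0 < (n%:R : R) by rewrite ltr0n.
rewrite ler_pdivlMr ?mulr_gt0 //; nra.
Qed.
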